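(* Every tree with more than two vertices is a skeleton.
   Context: For simple graphs $G$ and $H$, $H$ is a skeletal of $G$ if there is a surjective map $\phi:V(G)\to V(H)$ such that for all distinct vertices $a,b$ of $G$: $a$ and $b$ are adjacent in $G$ if and only if $\phi(a)=\phi(b)$ or $\phi(a)$ and $\phi(b)$ are adjacent in $H$. A skeletal $H$ of $G$ under $\phi$ is proper if $|\phi^{-1}(v)|\ge 2$ for at least one vertex $v$ of $H$. A graph is a skeleton if it has no proper skeletal. *)

(* Defs.v *)
From mathcomp Require Import all_boot.
Set Implicit Arguments. Unset Strict Implicit. Unset Printing Implicit Defensive.

Definition simple_graph (T : finType) (e : rel T) : Prop :=
  symmetric e /\ irreflexive e.

Definition connected_graph (T : finType) (e : rel T) : Prop :=
  forall x y : T, connect e x y.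

Definition acyclic_graph (T : finType) (e : rel T) : Prop :=
  forall s : seq T, uniq s -> 3 <= size s -> ~~ cycle e s.

Definition is_tree (T : finType) (e : rel T) : Prop :=
  simple_graph e /\ connected_graph e /\ acyclic_graph e.

Definition skeletal_under (V W : finType) (g : rel V) (h : rel W) (phi : V -> W)
  : Prop :=
  (forall w : W, exists v : V, phi v = w) /\
  (forall a b : V, a != b -> g a b = (phi a == phi b) || h (phi a) (phi b)).

Definition proper_skeletal_under (V W : finType) (g : rel V) (h : rel W)
  (phi : V -> W) : Prop :=
  skeletal_under g h phi /\ exists w : W, 2 <= #|[pred v | phi v == w]|.

Definition is_skeleton (V : finType) (g : rel V) : Prop :=
  forall (W : finType) (h : rel W) (phi : V -> W),
    simple_graph h -> ~ proper_skeletal_under g h phi.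

(* Main.v *)
Require Import Defs.
From mathcomp Require Import all_boot.

Theorem mainTheorem4 (V : finType) (g : rel V) :
  is_tree g -> 2 < #|V| -> is_skeleton g.
Proof.
move=> [[gsym girr] [gconn gacyc]] V3 W h phi _ [[_ Hsk] [w Hw]].
have [a [b [Ha Hb ab]]] := card_gt1P Hw.
rewrite inE in Ha; rewrite inE in Hb.
move/eqP: Ha => Ha; move/eqP: Hb => Hb.
have gab : g a b by rewrite Hsk // Ha Hb eqxx.
have same : forall c, c != a -> c != b -> g a c = g b c.
  move=> c ca cb.
  by rewrite Hsk 1?eq_sym // [g b c]Hsk 1?eq_sym // Ha Hb.
pose S := [set a; b].
have [c0 c0S] : exists c0, c0 \notin S.
  apply/existsP; rewrite -negb_forall; apply/negP => /forallP allS.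
  have : #|V| <= #|S|.
    rewrite -cardsT; apply: subset_leq_card; apply/subsetP => x _; exact: allS.
  by rewrite cards2 ab; move: V3; case: #|V| => // [] [] // [] //.
have [c [ca cb gac]] : exists c, [/\ c != a, c != b & g a c].
  case: (pickP [pred c | (c != a) && (c != b) && g a c]) => [c /andP[/andP[ca cb] gc]|none].
    by exists c.
  exfalso.
  have key : forall p x, x \in S -> path g x p -> last x p \in S.
    elim=> [|y p IH] x xS //= /andP[gxy pth]; apply: IH pth.
    rewrite !inE; apply/negPn/negP; rewrite negb_or => /andP[ya yb].
    move: (none y); rewrite /= ya yb /=.
    move: xS; rewrite !inE => /orP[]/eqP Ex; rewrite Ex in gxy; first by rewrite gxy.
    by rewrite same // gxy.
  case/connectP: (gconn a c0) => p pth Ec.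
  by move: (key p a (setU11 _ _) pth); rewrite -Ec (negbTE c0S).
have := gacyc [:: a; b; c].
rewrite /= !inE negb_or ab eq_sym ca eq_sym cb /= => /(_ isT isT).
by rewrite gab -same // gac gsym gac.
Qed.
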